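(* Let $\mathbf d$ be a graphical degree sequence of even length. Then $\mathbf d$ has a realization containing a perfect 2-matching if and only if $\mathbf d$ has a realization containing a perfect matching.
   Context: All graphs are finite and simple. A sequence $(d_1,\dots,d_n)$ is graphical if some simple graph on $\{v_1,\dots,v_n\}$ has $d(v_i)=d_i$ for all $i$; such a graph is a realization. A perfect 2-matching of a graph is a spanning subgraph each of whose connected components is either a $K_2$ (a single edge) or an odd cycle. *)

(* Defs.v *)
From mathcomp Require Import all_boot.
Set Implicit Arguments. Unset Strict Implicit. Unset Printing Implicit Defensive.

Definition simple_graph (n : nat) (e : rel 'I_n) : Prop :=
  irreflexive e /\ symmetric e.

Definition deg (n : nat) (e : rel 'I_n) (v : 'I_n) : nat := #|[set w | e v w]|.

Definition realization (d : seq nat) (e : rel 'I_(size d)) : Prop :=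
  simple_graph e /\ forall i : 'I_(size d), deg e i = nth 0 d i.

Arguments realization : clear implicits.

Definition graphical (d : seq nat) : Prop := exists e, realization d e.

Definition spanning_subgraph (n : nat) (h e : rel 'I_n) : Prop :=
  simple_graph h /\ forall x y, h x y -> e x y.

Definition component (n : nat) (h : rel 'I_n) (x : 'I_n) : {set 'I_n} :=
  [set y | connect h x y].

Definition comp_is_K2 (n : nat) (h : rel 'I_n) (C : {set 'I_n}) : Prop :=
  exists x y, [/\ x != y, C = [set x; y] & h x y].

(* the component C of h is an odd cycle: its vertices can be listed
   cyclically as s = [x_0; ...; x_(k-1)], k odd, k >= 3, and the edges of h
   inside C are exactly the pairs of cyclically consecutive vertices *)
Definition comp_is_odd_cycle (n : nat) (h : rel 'I_n) (C : {set 'I_n}) : Prop :=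
  exists s : seq 'I_n,
    [/\ uniq s, odd (size s), 3 <= size s, C = [set x in s] &
        forall x y, x \in C -> y \in C ->
          h x y = (y == next s x) || (x == next s y)].

Definition perfect_2matching (n : nat) (e h : rel 'I_n) : Prop :=
  spanning_subgraph h e /\
  forall x, comp_is_K2 h (component h x) \/ comp_is_odd_cycle h (component h x).

Definition perfect_matching (n : nat) (e h : rel 'I_n) : Prop :=
  spanning_subgraph h e /\ forall x, comp_is_K2 h (component h x).

(* Main.v *)
Require Import Defs.
From mathcomp Require Import all_boot zify.
Set Implicit Arguments. Unset Strict Implicit. Unset Printing Implicit Defensive.

Section M.
Variable n : nat.
Implicit Types (e : rel 'I_n) (S B : {set 'I_n}) (f : 'I_n -> 'I_n).

Definition matching e S f :=
  forall x, x \in S -> [/\ f x \in S, f x != x, f (f x) = x & e x (f x)].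

Definition OB e B := odd #|B| /\ forall x, x \in B ->
  (exists g, matching e (B :\ x) g) /\ (exists y, [/\ y \in B, y != x & e x y]).

Lemma match_even e S f : matching e S f -> ~~ odd #|S|.
Proof.
move: {2}#|S| (leqnn #|S|) => k; elim: k S => [|k IH] S.
  by rewrite leqn0 => /eqP ->.
move=> Hk Hm; case: (set_0Vmem S) => [->|[x xS]]; first by rewrite cards0.
have [fxS fxx ffx _] := Hm x xS.
pose S' := S :\ x :\ f x.
have HS : #|S| = (#|S'|).+2.
  rewrite (cardsD1 x S) xS (cardsD1 (f x) (S :\ x)).
  rewrite !inE fxx fxS /=.
  by rewrite add1n.
have Hm' : matching e S' f.
  move=> z; rewrite !inE => /and3P [zfx zx zS].
  have [fzS fzz ffz ez] := Hm z zS.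
  split => //; rewrite fzS andbT; apply/andP; split.
  - apply/eqP => E; move/eqP: zx; apply; by rewrite -ffz E ffx.
  - apply/eqP => E; move/eqP: zfx; apply; by rewrite -ffz E.
rewrite HS /= negbK; apply: IH Hm'; move: Hk; rewrite HS ltnS; exact: ltnW.
Qed.

Lemma match_glue e S T f g : matching e S f -> matching e T g -> [disjoint S & T] ->
  matching e (S :|: T) (fun z => if z \in S then f z else g z).
Proof.
move=> Hf Hg D z; rewrite inE; case zS: (z \in S) => /=.
  move=> _; have [h1 h2 h3 h4] := Hf z zS.
  by rewrite h1 h3 inE h1; split.
move=> zT; have [gT h2 h3 h4] := Hg z zT.
have gS : (g z \in S) = false.
  exact: (disjointFl D gT).
by rewrite inE gS gT orbT h3; split.
Qed.

Lemma match_pair e a b : symmetric e -> a != b -> e a b ->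
  matching e [set a; b] (fun z => if z == a then b else a).
Proof.
move=> sym ab eab z; have ba : (b == a) = false by rewrite eq_sym (negbTE ab).
rewrite !inE => /orP [] /eqP ->.
  by rewrite eqxx ba eqxx orbT; split => //; rewrite ba.
by rewrite ba !eqxx; split => //; rewrite sym.
Qed.

Lemma match_mono e e' S f : matching e S f ->
  (forall x, x \in S -> f x \in S -> e x (f x) -> e' x (f x)) -> matching e' S f.
Proof. by move=> Hm H x xS; have [? ? ? ?] := Hm x xS; split => //; apply: H. Qed.

Lemma match_eqS e S T f : S = T -> matching e S f -> matching e T f.
Proof. by move=> ->. Qed.

End M.

Section S.
Variable n : nat.
Implicit Types (e : rel 'I_n) (S B : {set 'I_n}) (f : 'I_n -> 'I_n).

Definition isp (u v x y : 'I_n) := ((x == u) && (y == v)) || ((x == v) && (y == u)).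
Definition sw e (a a2 b b2 : 'I_n) : rel 'I_n := fun x y =>
  (e x y && ~~ isp a a2 x y && ~~ isp b b2 x y) || isp a b x y || isp a2 b2 x y.

Lemma isp_sym u v x y : isp u v x y = isp u v y x.
Proof. by rewrite /isp; case: (x == u); case: (y == v); case: (x == v); case: (y == u). Qed.

Lemma isp_out u v x y : x != u -> x != v -> isp u v x y = false.
Proof. by rewrite /isp => /negbTE -> /negbTE ->. Qed.

Lemma deg_swap e e' v p q : e v p -> ~~ e v q ->
  (forall w, e' v w = (e v w && (w != p)) || (w == q)) -> deg e' v = deg e v.
Proof.
move=> evp evq H; rewrite /deg.
have -> : [set w | e' v w] = q |: ([set w | e v w] :\ p).
  by apply/setP => w; rewrite !inE H orbC andbC.
rewrite cardsU1 (cardsD1 p [set w | e v w]) !inE evp (negbTE evq) andbF.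
by rewrite add1n.
Qed.


Lemma isp_out2 u v x y : x != u -> y != u -> isp u v x y = false.
Proof. by rewrite /isp => /negbTE -> /negbTE ->; rewrite andbF. Qed.

Lemma isp_l u v y : u != v -> isp u v u y = (y == v).
Proof. by rewrite /isp eqxx /= => /negbTE ->; rewrite orbF. Qed.

Lemma isp_r u v y : u != v -> isp u v v y = (y == u).
Proof.
move=> uv; have vu : (v == u) = false by rewrite eq_sym (negbTE uv).
by rewrite /isp eqxx vu.
Qed.

Lemma isp_refl u v x : u != v -> isp u v x x = false.
Proof.
rewrite /isp => uv; case: (eqVneq x u) => [->|xu] /=; last by rewrite andbF.
by rewrite (negbTE uv).
Qed.

Lemma step e B1 B2 : simple_graph e -> [disjoint B1 & B2] -> OB e B1 -> OB e B2 ->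
 exists a b e2, [/\ a \in B1, b \in B2, simple_graph e2, (forall v, deg e2 v = deg e v) &
   e2 a b] /\ (forall x y, x \notin B1 :|: B2 -> e2 x y = e x y) /\
   (forall x y, e x y -> x != a -> y != a -> x != b -> y != b -> e2 x y).
Proof.
move=> [irr sym] D [o1 H1] [o2 H2].
case: (boolP [exists a in B1, exists b in B2, e a b]).
  move=> /existsP [a /andP [aB1 /existsP [b /andP [bB2 eab]]]].
  by exists a, b, e; do !split.
move=> Hn.
have Hne : forall x y, x \in B1 -> y \in B2 -> e x y = false.
  move=> x y xB yB; apply/negbTE; apply: contra Hn => exy.
  apply/existsP; exists x; rewrite xB; apply/existsP; exists y; by rewrite yB.
have nab : forall x y, x \in B1 -> y \in B2 -> x != y.
  by move=> x y xB yB; apply/eqP => E; subst; rewrite (disjointFr D xB) in yB.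
case: (set_0Vmem B1) => [E|[a aB1]]; first by rewrite E cards0 in o1.
case: (set_0Vmem B2) => [E|[b bB2]]; first by rewrite E cards0 in o2.
have [_ [a2 [a2B1 a2a eaa2]]] := H1 a aB1.
have [_ [b2 [b2B2 b2b ebb2]]] := H2 b bB2.
have aa2 : a != a2 by rewrite eq_sym.
have bb2 : b != b2 by rewrite eq_sym.
have ab := nab _ _ aB1 bB2.
have ab2 := nab _ _ aB1 b2B2.
have a2b := nab _ _ a2B1 bB2.
have a2b2 := nab _ _ a2B1 b2B2.
have ba : b != a by rewrite eq_sym.
have b2a : b2 != a by rewrite eq_sym.
have ba2 : b != a2 by rewrite eq_sym.
have b2a2 : b2 != a2 by rewrite eq_sym.
exists a, b, (sw e a a2 b b2); split; [split => // | split].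
- split.
    by move=> x; rewrite /sw irr /= !isp_refl.
  by move=> x y; rewrite /sw sym (isp_sym a a2) (isp_sym b b2) (isp_sym a b) (isp_sym a2 b2).
- move=> v.
  case: (eqVneq v a) => [->|va].
    apply: (deg_swap (p := a2) (q := b)) => //; first by rewrite Hne.
    move=> w; rewrite /sw isp_l // (isp_out (u:=b) (v:=b2) (x:=a)) // isp_l // (isp_out (u:=a2) (v:=b2) (x:=a)) //.
    by rewrite andbT orbF.
  case: (eqVneq v a2) => [->|va2].
    apply: (deg_swap (p := a) (q := b2)) => //; first by rewrite sym.
      by rewrite Hne.
    move=> w; rewrite /sw isp_r // (isp_out (u:=b) (v:=b2) (x:=a2)) // (isp_out (u:=a) (v:=b) (x:=a2)) //.
    by rewrite isp_l // andbT orbF.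
  case: (eqVneq v b) => [->|vb].
    apply: (deg_swap (p := b2) (q := a)) => //; first by rewrite sym Hne.
    move=> w; rewrite /sw (isp_out (u:=a) (v:=a2) (x:=b)) // isp_l // isp_r //.
    by rewrite (isp_out (u:=a2) (v:=b2) (x:=b)) // andbT orbF.
  case: (eqVneq v b2) => [->|vb2].
    apply: (deg_swap (p := b) (q := a2)) => //; first by rewrite sym.
      by rewrite sym Hne.
    move=> w; rewrite /sw (isp_out (u:=a) (v:=a2) (x:=b2)) // isp_r //.
    by rewrite (isp_out (u:=a) (v:=b) (x:=b2)) // isp_r // andbT orbF.
  rewrite /deg; apply: eq_card => w; rewrite !inE /sw.
  by rewrite !isp_out //= !andbT !orbF.
- by rewrite /sw (isp_l (u:=a) (v:=b)) // eqxx /= orbT.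
- move=> x y; rewrite !inE negb_or => /andP [xB1 xB2].
  have xa : x != a by apply: contraNneq xB1 => ->.
  have xa2 : x != a2 by apply: contraNneq xB1 => ->.
  have xb : x != b by apply: contraNneq xB2 => ->.
  have xb2 : x != b2 by apply: contraNneq xB2 => ->.
  by rewrite /sw !isp_out //= !andbT !orbF.
- move=> x y exy xa ya xb yb.
  by rewrite /sw exy (@isp_out2 a a2 x y) // (@isp_out2 b b2 x y).
Qed.

End S.

Section C.
Variable n : nat.
Implicit Types (e : rel 'I_n) (S B : {set 'I_n}) (f : 'I_n -> 'I_n).

Lemma disj_by (A B : {set 'I_n}) : (forall x, x \in A -> x \in B -> False) -> [disjoint A & B].
Proof.
move=> H; rewrite -setI_eq0; apply/eqP/setP => x; rewrite !inE.
by apply/negbTE/negP => /andP [] xA xB; apply: (H x).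
Qed.

Lemma OB_transfer e e2 B : OB e B -> (forall x y, x \in B -> e2 x y = e x y) -> OB e2 B.
Proof.
move=> [o H] E; split => // x xB; have [[g Hg] [y [yB yx exy]]] := H x xB.
split; last by exists y; split => //; rewrite E.
exists g; apply: (match_mono (e' := e2) Hg) => z; rewrite inE => /andP [_ zB] _; by rewrite E.
Qed.

Lemma main e (P : {set {set 'I_n}}) S f :
  simple_graph e -> ~~ odd n ->
  (forall B1 B2, B1 \in P -> B2 \in P -> B1 != B2 -> [disjoint B1 & B2]) ->
  (forall B, B \in P -> OB e B) ->
  (forall x, (x \in S) = ~~ [exists B in P, x \in B]) ->
  matching e S f ->
  exists e' g, [/\ simple_graph e', (forall v, deg e' v = deg e v) & matching e' setT g].
Proof.
move: {2}#|P| (leqnn #|P|) => k; elim: k e P S f => [|k IH] e P S f Hk Hs Hn HD HOB HS Hm.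
  have P0 : P = set0 by apply/eqP; rewrite -cards_eq0 -leqn0.
  exists e, f; split => //; apply: match_eqS Hm; apply/setP => x.
  by rewrite HS inE P0; apply/negP => /existsP [B]; rewrite inE.
case: (set_0Vmem P) => [P0|[B1 B1P]].
  exists e, f; split => //; apply: match_eqS Hm; apply/setP => x.
  by rewrite HS inE P0; apply/negP => /existsP [B]; rewrite inE.
have notS : forall x B, B \in P -> x \in B -> x \notin S.
  by move=> x B BP xB; rewrite HS negbK; apply/existsP; exists B; rewrite BP.
case: (set_0Vmem (P :\ B1)) => [P1|[B2]].
  exfalso; have [o1 _] := HOB B1 B1P.
  have SE : S = ~: B1.
    apply/setP => x; rewrite HS inE; congr negb; apply/existsP/idP.
      move=> [B /andP [BP xB]]; case: (eqVneq B B1) => [<- //|BB1].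
      by have := P1; move/setP/(_ B); rewrite !inE BB1 BP.
    by move=> xB1; exists B1; rewrite B1P.
  have := cardsC B1; rewrite card_ord -SE => Hc.
  move: Hn; rewrite -Hc oddD o1 /=; by rewrite (match_even Hm).
rewrite !inE => /andP [B2B1 B2P].
have D12 : [disjoint B1 & B2] by apply: HD => //; rewrite eq_sym.
have [a [b [e2 [[aB1 bB2 Hs2 Hdeg e2ab] [Hout Hin]]]]] := step Hs D12 (HOB _ B1P) (HOB _ B2P).
have [[g1 Hg1] _] := (HOB _ B1P).2 a aB1.
have [[g2 Hg2] _] := (HOB _ B2P).2 b bB2.
have nab : forall x y, x \in B1 -> y \in B2 -> x != y.
  by move=> x y xB yB; apply/eqP => E; subst; rewrite (disjointFr D12 xB) in yB.
have aS : a \notin S by apply: notS aB1.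
have bS : b \notin S by apply: notS bB2.
have aB2 : (a \in B2) = false by apply: (disjointFr D12 aB1).
have bB1 : (b \in B1) = false by apply: (disjointFl D12 bB2).
have Hg1' : matching e2 (B1 :\ a) g1.
  apply: (match_mono (e' := e2) Hg1) => x; rewrite !inE => /andP [xa xB] /andP [gxa gxB] exg.
  by apply: Hin => //; apply: nab.
have Hg2' : matching e2 (B2 :\ b) g2.
  apply: (match_mono (e' := e2) Hg2) => x; rewrite !inE => /andP [xb xB] /andP [gxb gxB] exg.
  by apply: Hin => //; rewrite eq_sym; apply: nab.
have Hm' : matching e2 S f.
  apply: (match_mono (e' := e2) Hm) => x xS _ exf; rewrite Hout // !inE negb_or.
  by apply/andP; split; apply/negP => xB; [move: (notS _ _ B1P xB) | move: (notS _ _ B2P xB)]; rewrite xS.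
have [_ sym2] := Hs2.
have D1 : [disjoint S & B1 :\ a].
  apply: disj_by => x; rewrite !inE => xS /andP [_ xB1].
  by move: (notS x B1 B1P xB1); rewrite xS.
have G1 := match_glue Hm' Hg1' D1.
have D2 : [disjoint S :|: B1 :\ a & B2 :\ b].
  apply: disj_by => x; rewrite !inE => /orP [xS | /andP [_ xB1]] /andP [_ xB2].
    by move: (notS x B2 B2P xB2); rewrite xS.
  by rewrite (disjointFr D12 xB1) in xB2.
have G2 := match_glue G1 Hg2' D2.
have D3 : [disjoint S :|: B1 :\ a :|: B2 :\ b & [set a; b]].
  apply: disj_by => x; rewrite !inE => H /orP [] /eqP E; subst x; move: H.
    by rewrite (negbTE aS) aB2 eqxx /= andbF.
  by rewrite (negbTE bS) bB1 eqxx /= andbF.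
have G3 := match_glue G2 (match_pair sym2 (nab _ _ aB1 bB2) e2ab) D3.
have SE : S :|: B1 :\ a :|: B2 :\ b :|: [set a; b] = S :|: B1 :|: B2.
  apply/setP => x; rewrite !inE; case: (eqVneq x a) => [->|xa]; first by rewrite aB1 !orbT.
  case: (eqVneq x b) => [->|xb]; first by rewrite bB2 !orbT.
  by rewrite /= !orbF.
have G4 := match_eqS SE G3.
set P' := P :\ B1 :\ B2.
have HS' : forall x, (x \in S :|: B1 :|: B2) = ~~ [exists C in P', x \in C].
  move=> x; rewrite !inE HS.
  case: (boolP (x \in B1)) => xB1 /=.
    rewrite orbT; apply/esym/negP => /existsP [C /andP [CP xC]]; move: CP.
    rewrite !inE => /and3P [CB2 CB1 CP].
    have hC : B1 != C by rewrite eq_sym.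
    by rewrite (disjointFr (HD _ _ B1P CP hC) xB1) in xC.
  case: (boolP (x \in B2)) => xB2 /=.
    rewrite orbT; apply/esym/negP => /existsP [C /andP [CP xC]]; move: CP.
    rewrite !inE => /and3P [CB2 CB1 CP].
    have hC : B2 != C by rewrite eq_sym.
    by rewrite (disjointFr (HD _ _ B2P CP hC) xB2) in xC.
  rewrite !orbF; congr negb; apply/existsP/existsP => [[C /andP [CP xC]]|[C /andP [CP xC]]].
    exists C; rewrite xC andbT !inE CP andbT; apply/andP; split; apply/eqP => E; subst.
      by rewrite xC in xB2.
    by rewrite xC in xB1.
  exists C; move: CP; rewrite !inE xC andbT; by case/and3P.
have Hk' : #|P'| <= k.
  move: Hk; rewrite (cardsD1 B1 P) B1P (cardsD1 B2 (P :\ B1)) !inE B2B1 B2P /=.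
  by rewrite !add1n ltnS => /ltnW.
have HD' : forall C1 C2, C1 \in P' -> C2 \in P' -> C1 != C2 -> [disjoint C1 & C2].
  by move=> C1 C2; rewrite !inE => /and3P [_ _ C1P] /and3P [_ _ C2P]; exact: HD.
have HOB' : forall C, C \in P' -> OB e2 C.
  move=> C; rewrite !inE => /and3P [CB2 CB1 CP].
  apply: OB_transfer (HOB _ CP) _ => x y xC; apply: Hout; rewrite !inE negb_or.
  by rewrite (disjointFr (HD _ _ CP B1P CB1) xC) (disjointFr (HD _ _ CP B2P CB2) xC).
have [e' [g [Hs' Hd' Hm'']]] := IH e2 P' _ _ Hk' Hs2 Hn HD' HOB' HS' G4.
exists e', g; split => // v; by rewrite Hd' Hdeg.
Qed.
End C.

Section D.
Variable n : nat.
Implicit Types (e h : rel 'I_n) (S B : {set 'I_n}) (f : 'I_n -> 'I_n).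

Lemma cyc_match e x (t : seq 'I_n) : symmetric e -> uniq t -> ~~ odd (size t) ->
  (forall j, j.+1 < size t -> e (nth x t j) (nth x t j.+1)) ->
  matching e [set z in t]
    (fun z => nth x t (if odd (index z t) then (index z t).-1 else (index z t).+1)).
Proof.
move=> sym ut et Ht z; rewrite inE => zt.
have it : index z t < size t by rewrite index_mem.
have nz : nth x t (index z t) = z by rewrite nth_index.
case oi: (odd (index z t)).
  have i0 : 0 < index z t by case: (index z t) oi.
  have i1 : (index z t).-1 < size t by apply: leq_ltn_trans it; apply: leq_pred.
  have ii : index (nth x t (index z t).-1) t = (index z t).-1 by rewrite index_uniq.
  have oi1 : odd (index z t).-1 = false by move: oi i0; case: (index z t) => //= k; case: (odd k).
  rewrite ii oi1 (prednK i0) nz; split => //.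
  - by rewrite inE mem_nth.
  - by rewrite -{2}nz nth_uniq // -{2}(prednK i0) neq_ltn ltnSn.
  - rewrite sym; have := Ht (index z t).-1; rewrite (prednK i0) nz; by apply.
have i1 : (index z t).+1 < size t.
  rewrite ltn_neqAle it andbT; apply/eqP => E; move: et; by rewrite -E /= oi.
have ii : index (nth x t (index z t).+1) t = (index z t).+1 by rewrite index_uniq.
rewrite ii /= oi /= nz; split => //.
- by rewrite inE mem_nth.
- by rewrite -{2}nz nth_uniq // neq_ltn ltnSn orbT.
- by have := Ht (index z t) i1; rewrite nz.
Qed.


Lemma cyc_OB e h C : simple_graph e -> (forall x y, h x y -> e x y) ->
  comp_is_odd_cycle h C -> OB e C.
Proof.
move=> [irr sym] he [s [us os s3 CE Hh]].
have cs : #|C| = size s by rewrite CE cardsE; apply/card_uniqP.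
have edge : forall z, z \in s -> e z (next s z).
  move=> z zs; apply: he; have zC : z \in C by rewrite CE inE.
  have nC : next s z \in C by rewrite CE inE mem_next.
  by rewrite Hh // eqxx.
split; first by rewrite cs.
move=> x; rewrite CE inE => xs.
set t := drop (index x s).+1 s ++ take (index x s) s.
have ct : rot (index x s) s = x :: t by rewrite rot_index.
have uc : uniq (x :: t) by rewrite -ct rot_uniq.
have st : size t = (size s).-1 by rewrite -[size t]/((size (x :: t)).-1) -ct size_rot.
have memc : forall z, (z \in s) = (z \in x :: t) by move=> z; rewrite -ct mem_rot.
have nc : forall z, next s z = next (x :: t) z by move=> z; rewrite -ct next_rot.
have xt : x \notin t by move: uc => /= /andP [].
have ut : uniq t by move: uc => /= /andP [].
have Ht : forall j, j.+1 < size t -> e (nth x t j) (nth x t j.+1).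
  move=> j jt; have jt' : j < size t by apply: ltnW.
  set w := nth x t j.
  have wt : w \in t by apply: mem_nth.
  have wx : (x == w) = false by apply/negbTE; apply: contraNneq xt => ->.
  have := edge w; rewrite memc inE wt orbT nc => /(_ isT).
  rewrite next_nth inE wt orbT /= wx /w index_uniq //.
split.
  exists (fun z => nth x t (if odd (index z t) then (index z t).-1 else (index z t).+1)).
  apply: (match_eqS (S := [set z in t]) _ (cyc_match sym ut _ Ht)).
    apply/setP => z; rewrite !inE memc inE; case: (eqVneq z x) => [->|zx] /=; first by rewrite (negbTE xt).
    done.
  by rewrite st; move: os s3; case: (size s) => //= k; rewrite negbK.
exists (next s x); split.
- by rewrite inE mem_next.
- rewrite nc next_nth inE eqxx /= eqxx.
  have t0 : 0 < size t by rewrite st; move: s3; case: (size s) => // [] [] // [].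
  by apply: contraNneq xt => <-; apply: mem_nth.
- by apply: edge.
Qed.


Lemma comp_sym h x y : symmetric h -> y \in component h x ->
  component h y = component h x.
Proof.
move=> sym; rewrite inE => cxy; apply/setP => z; rewrite !inE; apply/idP/idP => H.
  exact: connect_trans cxy H.
apply: connect_trans H; by rewrite (sym_connect_sym sym).
Qed.

Lemma K2_nb h x : simple_graph h -> comp_is_K2 h (component h x) ->
  exists y, h x y /\ forall z, h x z -> z = y.
Proof.
move=> [irr sym] [u [v [uv CE huv]]].
have Hz : forall z, h x z -> z \in [set u; v].
  by move=> z hz; rewrite -CE inE connect1.
have xC : x \in component h x by rewrite inE connect0.
rewrite CE !inE in xC; case/orP: xC => /eqP E; subst x.
  exists v; split => // z hz; have := Hz z hz; rewrite !inE => /orP [] /eqP // E.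
  by subst; rewrite irr in hz.
exists u; split; first by rewrite sym.
move=> z hz; have := Hz z hz; rewrite !inE => /orP [] /eqP // E.
by subst; rewrite irr in hz.
Qed.

Lemma K2_card h C : comp_is_K2 h C -> #|C| = 2.
Proof. by move=> [u [v [uv -> _]]]; rewrite cards2 uv. Qed.

Lemma oc_card h C : comp_is_odd_cycle h C -> odd #|C|.
Proof.
move=> [s [us os _ -> _]]; suff -> : #|[set x in s]| = size s by [].
by rewrite cardsE; apply/card_uniqP.
Qed.

Lemma to_pm e g : simple_graph e -> matching e setT g ->
  perfect_matching e (fun x y => g x == y).
Proof.
move=> [irr sym] Hm.
have Hg : forall x, [/\ g x != x, g (g x) = x & e x (g x)].
  by move=> x; have [_ ? ? ?] := Hm x (in_setT x); split.
split.
  split; last by move=> x y /eqP <-; have [] := Hg x.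
  split; first by move=> x /=; have [] := Hg x; move/negbTE.
  move=> x y /=; apply/eqP/eqP => E; [rewrite -E | rewrite -E]; by have [] := Hg x; have [] := Hg y.
move=> x; exists x, (g x); split => //; first by rewrite eq_sym; have [] := Hg x.
apply/setP => y; rewrite !inE; apply/idP/idP.
  move=> cxy; have cl : closed (fun a b => g a == b) [set x; g x].
    move=> a b /eqP <-; rewrite !inE.
    have [ga gga _] := Hg a.
    case: (eqVneq a x) => [->|ax]; first by rewrite eqxx orbT.
    case: (eqVneq a (g x)) => [->|agx]; first by have [_ -> _] := Hg x; rewrite eqxx.
    apply/esym/negbTE; rewrite negb_or; apply/andP; split; apply/eqP => E.
      by move/eqP: agx; apply; rewrite -E gga.
    by move/eqP: ax; apply; rewrite -gga E; have [_ -> _] := Hg x.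
  have := closed_connect cl cxy; rewrite !inE eqxx /= => <-.
  done.
case/orP => /eqP ->; first exact: connect0.
by apply: connect1.
Qed.

End D.

Section E.
Variable n : nat.
Implicit Types (e h : rel 'I_n) (S B : {set 'I_n}) (f : 'I_n -> 'I_n).

Lemma from_p2m e h : simple_graph e -> ~~ odd n -> perfect_2matching e h ->
  exists e' g, [/\ simple_graph e', (forall v, deg e' v = deg e v) & matching e' setT g].
Proof.
move=> se en [[sh he] Hc].
have [irh symh] := sh.
pose P := [set C in (component h) @: [set: 'I_n] | odd #|C|].
pose S := [set x | ~~ odd #|component h x|].
pose f x := odflt x [pick y | h x y].
have HSx : forall x, (x \in S) = ~~ [exists C in P, x \in C].
  move=> x; rewrite inE; congr negb; apply/idP/existsP.
    move=> ox; exists (component h x).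
    have -> : component h x \in P by rewrite inE ox andbT; apply/imsetP; exists x.
    by rewrite inE connect0.
  move=> [C /andP [CP xC]]; move: CP; rewrite inE => /andP [/imsetP [y _ E] oy].
  subst C; by rewrite (comp_sym symh xC).
have HD : forall B1 B2, B1 \in P -> B2 \in P -> B1 != B2 -> [disjoint B1 & B2].
  move=> B1 B2; rewrite !inE => /andP [/imsetP [y1 _ ->] _] /andP [/imsetP [y2 _ ->] _] ne.
  apply: disj_by => z z1 z2; move/eqP: ne; apply.
  by rewrite -(comp_sym symh z1) -(comp_sym symh z2).
have HOB : forall B, B \in P -> OB e B.
  move=> B; rewrite inE => /andP [/imsetP [y _ ->] oy].
  case: (Hc y) => [K|O]; last exact: cyc_OB se he O.
  by rewrite (K2_card K) in oy.
have Hm : matching e S f.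
  have nb : forall x, x \in S -> h x (f x) /\ forall z, h x z -> z = f x.
    move=> x; rewrite inE => ex.
    case: (Hc x) => [K|O]; last by rewrite (oc_card O) in ex.
    have [y [hy uy]] := K2_nb sh K.
    rewrite /f; case: pickP => [z hz|/(_ y)]; last by rewrite hy.
    by rewrite (uy z hz) /=; split => // w /uy.
  move=> x xS; have [hx ux] := nb x xS.
  have cfx : component h (f x) = component h x by apply: comp_sym; rewrite // inE connect1.
  have fxS : f x \in S by move: xS; rewrite !inE cfx.
  have [hfx ufx] := nb _ fxS.
  split => //.
  - by apply/eqP => E; rewrite E irh in hx.
  - by rewrite -(ufx x) // symh.
  - by apply: he.
exact: (main se en HD HOB HSx Hm).
Qed.

End E.

Unset Implicit Arguments.

Theorem theorem19 (d : seq nat) :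
  ~~ odd (size d) -> graphical d ->
  (exists e, realization d e /\ exists h, perfect_2matching e h) <->
  (exists e, realization d e /\ exists h, perfect_matching e h).
Proof.
move=> en _; split.
- move=> [e [[se de] [h Hh]]].
  have [e' [g [se' de' Hm]]] := from_p2m se en Hh.
  exists e'; split; first by split => // i; rewrite de' de.
  exists (fun x y => g x == y); exact: to_pm se' Hm.
- move=> [e [Re [h [Hsp Hk]]]]; exists e; split => //; exists h; split => // x; by left.
Qed.
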